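(* Let $n\ge2$, $F_1,\dots,F_n:\mathbb{R}^d\to\mathbb{R}^d$, $F=\frac1n\sum_iF_i$, with $F$ $\mu$-strongly monotone ($\mu>0$) and each $F_i$ $L_i$-Lipschitz; let $z_*$ be the solution of $F(z_* )=0$, $L_{max}=\max_iL_i$, $\sigma_*^2=\frac1n\sum_i\|F_i(z_* )\|^2$. Consider the iterates $z_0^k$ of IEG (defined in the context) started at $z_0$. 1. If $\gamma_2=2\gamma_1$ and $\gamma_1\le\frac{\mu}{10L_{max}^2\sqrt{10n^2+n+29}}$, then $$\|z_0^k-z_*\|^2\le\Big(1-\frac{\gamma_1n\mu}{4}\Big)^k\|z_0-z_*\|^2+\frac{48L_{max}^2}{\mu^2}\big[6n(n-1)\gamma_1^2+\gamma_2^2\big]\sigma_*^2.$$ 2. If IEG is run for $K$ epochs with $\gamma_2=2\gamma_1$ and $\gamma_1=\min\Big\{\frac{\mu}{10L_{max}^2\sqrt{10n^2+2n+29}},\frac{4\log(n^{1/2}K)}{\mu nK}\Big\}$, then $$\|z_0^K-z_*\|^2=\tilde{\mathcal{O}}\Big(e^{-\frac{K\mu^2}{L_{max}^2}}+\frac1{K^2}\Big).$$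
   Context: $\mu$-strongly monotone: $\langle F(z_1)-F(z_2),z_1-z_2\rangle\ge\mu\|z_1-z_2\|^2$. IEG (incremental extragradient) with step sizes $\gamma_1,\gamma_2>0$: set $z_0^0=z_0$; for each epoch $k=0,1,\dots$ and $i=0,\dots,n-1$ set $\bar z_i^k=z_i^k-\gamma_2F_{i+1}(z_i^k)$, $z_{i+1}^k=z_i^k-\gamma_1F_{i+1}(\bar z_i^k)$ (fixed original order every epoch); then $z_0^{k+1}=z_n^k$. $\tilde{\mathcal{O}}$ suppresses constant and logarithmic factors. *)

(* Defs.v *)
From HB Require Import structures.
From mathcomp Require Import all_boot all_order all_algebra.
From mathcomp Require Import all_classical all_reals all_analysis.
Set Implicit Arguments. Unset Strict Implicit. Unset Printing Implicit Defensive.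
Import Order.TTheory GRing.Theory Num.Theory.
Local Open Scope ring_scope.

Section Defs.
Variables (R : realType) (d n : nat).

Definition dotp (u v : 'rV[R]_d) : R := \sum_(j < d) u 0 j * v 0 j.
Definition sqnorm (v : 'rV[R]_d) : R := dotp v v.
Definition enorm (v : 'rV[R]_d) : R := Num.sqrt (sqnorm v).

Definition strongly_monotone (mu : R) (F : 'rV[R]_d -> 'rV[R]_d) : Prop :=
  forall z1 z2, mu * sqnorm (z1 - z2) <= dotp (F z1 - F z2) (z1 - z2).

Definition lipschitzE (L : R) (F : 'rV[R]_d -> 'rV[R]_d) : Prop :=
  forall x y, enorm (F x - F y) <= L * enorm (x - y).

Definition avgF (Fs : 'I_n -> 'rV[R]_d -> 'rV[R]_d) (z : 'rV[R]_d) : 'rV[R]_d :=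
  n%:R^-1 *: \sum_(i < n) Fs i z.

Definition Lmax (L : 'I_n -> R) : R := \big[Num.max/0]_(i < n) L i.

Definition sigma2 (Fs : 'I_n -> 'rV[R]_d -> 'rV[R]_d) (zs : 'rV[R]_d) : R :=
  n%:R^-1 * \sum_(i < n) sqnorm (Fs i zs).

Definition ieg_step (g1 g2 : R) (f : 'rV[R]_d -> 'rV[R]_d) (z : 'rV[R]_d) :=
  z - g1 *: f (z - g2 *: f z).

(* one epoch: inner steps with F_1, ..., F_n in the fixed original order
   (0-indexed here: Fs 0, ..., Fs (n-1)) *)
Definition ieg_epoch (g1 g2 : R) (Fs : 'I_n -> 'rV[R]_d -> 'rV[R]_d)
  (z : 'rV[R]_d) : 'rV[R]_d :=
  foldl (fun z i => ieg_step g1 g2 (Fs i) z) z (enum 'I_n).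

(* z_0^k : the iterate at the start of epoch k, started at z_0^0 = z0 *)
Definition ieg (g1 g2 : R) (Fs : 'I_n -> 'rV[R]_d -> 'rV[R]_d)
  (z0 : 'rV[R]_d) (k : nat) : 'rV[R]_d :=
  iter k (ieg_epoch g1 g2 Fs) z0.

End Defs.

(* Main.v *)
Require Import Defs.
From HB Require Import structures.
From mathcomp Require Import all_boot all_order all_algebra.
From mathcomp Require Import all_classical all_reals all_analysis.
From mathcomp Require Import ring lra.
Set Implicit Arguments. Unset Strict Implicit. Unset Printing Implicit Defensive.
Import Order.TTheory GRing.Theory Num.Theory.
Local Open Scope ring_scope.

Section Vec.
Variables (R : realType) (d : nat).
Implicit Types (u v w : 'rV[R]_d).

Lemma dotpC u v : dotp u v = dotp v u.
Proof. by apply: eq_bigr => j _; rewrite mulrC. Qed.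

Lemma dotpDl u v w : dotp (u + v) w = dotp u w + dotp v w.
Proof. rewrite /dotp -big_split /=; apply: eq_bigr => j _; by rewrite !mxE mulrDl. Qed.

Lemma dotpZl a u v : dotp (a *: u) v = a * dotp u v.
Proof. rewrite /dotp mulr_sumr; apply: eq_bigr => j _; by rewrite !mxE mulrA. Qed.

Lemma dotpNl u v : dotp (- u) v = - dotp u v.
Proof. by rewrite -scaleN1r dotpZl mulN1r. Qed.

Lemma dotpBl u v w : dotp (u - v) w = dotp u w - dotp v w.
Proof. by rewrite dotpDl dotpNl. Qed.

Lemma dotpDr u v w : dotp w (u + v) = dotp w u + dotp w v.
Proof. by rewrite dotpC dotpDl !(dotpC w). Qed.
Lemma dotpZr a u v : dotp u (a *: v) = a * dotp u v.
Proof. by rewrite dotpC dotpZl dotpC. Qed.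
Lemma dotpBr u v w : dotp w (u - v) = dotp w u - dotp w v.
Proof. by rewrite dotpC dotpBl !(dotpC w). Qed.

Lemma sqnorm_ge0 u : 0 <= sqnorm u.
Proof. by apply: sumr_ge0 => j _; rewrite -expr2 sqr_ge0. Qed.

Lemma enorm_ge0 u : 0 <= enorm u.
Proof. exact: sqrtr_ge0. Qed.

Lemma enorm_sq u : enorm u ^+ 2 = sqnorm u.
Proof. by rewrite sqr_sqrtr // sqnorm_ge0. Qed.

Lemma sqnormD u v : sqnorm (u + v) = sqnorm u + 2 * dotp u v + sqnorm v.
Proof. rewrite /sqnorm dotpDl !dotpDr (dotpC v u); ring. Qed.

Lemma sqnormB u v : sqnorm (u - v) = sqnorm u - 2 * dotp u v + sqnorm v.
Proof. rewrite /sqnorm dotpBl !dotpBr (dotpC v u); ring. Qed.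

Lemma sqnormZ a u : sqnorm (a *: u) = a ^+ 2 * sqnorm u.
Proof. rewrite /sqnorm dotpZl dotpZr; ring. Qed.

Lemma dotp_sq u v : dotp u v ^+ 2 <= sqnorm u * sqnorm v.
Proof.
have H t : 0 <= t ^+ 2 * sqnorm u - 2 * t * dotp u v + sqnorm v.
  have := sqnorm_ge0 (t *: u - v).
  by rewrite sqnormB sqnormZ dotpZl mulrA.
have [su0|su0] := eqVneq (sqnorm u) 0.
  rewrite su0 mul0r.
  have [b0|b0] := eqVneq (dotp u v) 0; first by rewrite b0 expr0n.
  exfalso.
  have := H ((sqnorm v + 1) / (2 * dotp u v)).
  rewrite su0 mulr0 add0r.
  have -> : 2 * ((sqnorm v + 1) / (2 * dotp u v)) * dotp u v = sqnorm v + 1.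
    by field; rewrite b0.
  lra.
have sp : 0 < sqnorm u by rewrite lt_def su0 sqnorm_ge0.
have := H (dotp u v / sqnorm u).
have -> : (dotp u v / sqnorm u) ^+ 2 * sqnorm u - 2 * (dotp u v / sqnorm u) * dotp u v
   = - (dotp u v ^+ 2 / sqnorm u) by field.
rewrite addrC subr_ge0 ler_pdivrMr //; by rewrite mulrC.
Qed.

Lemma CS u v : dotp u v <= enorm u * enorm v.
Proof.
rewrite /enorm -sqrtrM ?sqnorm_ge0 //.
apply: le_trans (ler_norm _) _.
by rewrite -sqrtr_sqr ler_wsqrtr // dotp_sq.
Qed.

Lemma enormD u v : enorm (u + v) <= enorm u + enorm v.
Proof.
rewrite -(ler_pXn2r (_ : 0 < 2)%N) ?nnegrE ?addr_ge0 ?enorm_ge0 //.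
rewrite enorm_sq sqnormD sqrrD !enorm_sq.
have := CS u v; lra.
Qed.

Lemma enormZ a u : enorm (a *: u) = `|a| * enorm u.
Proof. by rewrite /enorm sqnormZ sqrtrM ?sqr_ge0 // sqrtr_sqr. Qed.

Lemma enormN u : enorm (- u) = enorm u.
Proof. by rewrite -scaleN1r enormZ normrN normr1 mul1r. Qed.

Lemma enormB u v : enorm (u - v) <= enorm u + enorm v.
Proof. by apply: le_trans (enormD _ _) _; rewrite enormN. Qed.

Lemma enormBC u v : enorm (u - v) = enorm (v - u).
Proof. by rewrite -enormN opprB. Qed.

Lemma enorm_sum (I : Type) (s : seq I) (f : I -> 'rV[R]_d) :
  enorm (\sum_(i <- s) f i) <= \sum_(i <- s) enorm (f i).
Proof.
elim: s => [|x s IH]; first by rewrite !big_nil /enorm /sqnorm /dotp big1 ?sqrtr0 // => j _; rewrite mxE mul0r.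
by rewrite !big_cons; apply: le_trans (enormD _ _) _; rewrite lerD2l.
Qed.

End Vec.

Lemma final_arith (R : realType) (g N L mu r S sw e : R) :
  0 < g -> 2 <= N -> 0 < mu -> mu <= L -> 30 * g * N * L ^+ 2 <= mu ->
  0 <= r -> 0 <= S ->
  sw <= r ^+ 2 - 2 * (g * N * mu) * r ^+ 2 + g ^+ 2 * N ^+ 2 * L ^+ 2 * r ^+ 2 ->
  0 <= e -> e <= 5 * g ^+ 2 * N * L * (S + N * L * r) ->
  sw + 2 * r * e + e ^+ 2 <= (1 - g * N * mu / 2) * r ^+ 2 + 56 * (g ^+ 3 * N * L ^+ 2 * S ^+ 2 / mu).
Proof.
move=> g0 N2 mu0 muL hs r0 S0 hsw e0 he.
have L0 : 0 < L by apply: lt_le_trans muL.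
have N0 : 0 < N by lra.
set a := g * N * mu.
have a0 : 0 < a by rewrite /a !mulr_gt0.
set P := g ^+ 3 * N * L ^+ 2 * S ^+ 2 / mu.
have P0 : 0 <= P by rewrite /P !(mulr_ge0, invr_ge0, sqr_ge0, exprn_ge0) // ltW.
have y : g * N * L ^+ 2 <= mu / 30 by lra.
have f1 : g ^+ 2 * N ^+ 2 * L ^+ 2 <= a / 30.
  have -> : g ^+ 2 * N ^+ 2 * L ^+ 2 = (g * N) * (g * N * L ^+ 2) by ring.
  have -> : a / 30 = (g * N) * (mu / 30) by rewrite /a; ring.
  by apply: ler_wpM2l => //; rewrite mulr_ge0 // ltW.
have f2 : a <= 1 / 30.
  have h1 : a * L ^+ 2 <= mu * (mu / 30).
    have -> : a * L ^+ 2 = mu * (g * N * L ^+ 2) by rewrite /a; ring.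
    by apply: ler_wpM2l => //; exact: ltW.
  have h2 : mu * mu <= L ^+ 2 by rewrite expr2; apply: ler_pM => //; exact: ltW.
  have h3 : a * L ^+ 2 <= L ^+ 2 / 30 by lra.
  have L20 : 0 < L ^+ 2 by rewrite exprn_gt0.
  have : a * L ^+ 2 <= (1/30) * L ^+ 2 by lra.
  by rewrite ler_pM2r.
have f1r : g ^+ 2 * N ^+ 2 * L ^+ 2 * r ^+ 2 <= a / 30 * r ^+ 2 by apply: ler_wpM2r => //; exact: sqr_ge0.
have ii : 2 * r * e <= 10 * g ^+ 2 * N * L * r * S + 10 * (g ^+ 2 * N ^+ 2 * L ^+ 2 * r ^+ 2).
  have : 2 * r * e <= 2 * r * (5 * g ^+ 2 * N * L * (S + N * L * r)).
    by apply: ler_wpM2l => //; rewrite mulr_ge0.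
  move=> h; apply: (le_trans h); rewrite le_eqVlt; apply/orP; left; apply/eqP; ring.
have iii : 10 * g ^+ 2 * N * L * r * S <= a / 2 * r ^+ 2 + 50 * P.
  set Y := 10 * g ^+ 2 * N * L * S.
  have eY : 50 * P = Y ^+ 2 / (2 * a).
    rewrite /P /Y /a; field; rewrite !gt_eqF //.
  have : 0 <= (a * r - Y) ^+ 2 / (2 * a) by rewrite divr_ge0 ?sqr_ge0 // mulr_ge0 // ltW.
  have -> : (a * r - Y) ^+ 2 / (2 * a) = a / 2 * r ^+ 2 + Y ^+ 2 / (2 * a) - r * Y.
    by field; rewrite gt_eqF.
  rewrite eY.
  have -> : 10 * g ^+ 2 * N * L * r * S = r * Y by rewrite /Y; ring.
  lra.
have iv1 : e ^+ 2 <= (5 * g ^+ 2 * N * L * (S + N * L * r)) ^+ 2.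
  by rewrite ler_pXn2r // ?nnegrE // (le_trans e0 he).
have iv2 : (5 * g ^+ 2 * N * L * (S + N * L * r)) ^+ 2 <=
   50 * (g ^+ 4 * N ^+ 2 * L ^+ 2 * S ^+ 2) + 50 * (g ^+ 4 * N ^+ 4 * L ^+ 4 * r ^+ 2).
  have : 0 <= (5 * g ^+ 2 * N * L) ^+ 2 * (S - N * L * r) ^+ 2 by rewrite mulr_ge0 ?sqr_ge0.
  move=> h.
  have E1 : 50 * (g ^+ 4 * N ^+ 2 * L ^+ 2 * S ^+ 2) + 50 * (g ^+ 4 * N ^+ 4 * L ^+ 4 * r ^+ 2)
     - (5 * g ^+ 2 * N * L * (S + N * L * r)) ^+ 2 = (5 * g ^+ 2 * N * L) ^+ 2 * (S - N * L * r) ^+ 2.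
    by ring.
  lra.
have iv3 : g ^+ 4 * N ^+ 2 * L ^+ 2 * S ^+ 2 <= 1 / 30 * P.
  have -> : g ^+ 4 * N ^+ 2 * L ^+ 2 * S ^+ 2 = a * P by rewrite /a /P; field; rewrite gt_eqF.
  by apply: ler_wpM2r.
have iv4 : g ^+ 4 * N ^+ 4 * L ^+ 4 * r ^+ 2 <= a / 500 * r ^+ 2.
  apply: ler_wpM2r; first exact: sqr_ge0.
  have -> : g ^+ 4 * N ^+ 4 * L ^+ 4 = (g ^+ 2 * N ^+ 2 * L ^+ 2) ^+ 2 by ring.
  have q0 : 0 <= g ^+ 2 * N ^+ 2 * L ^+ 2 by rewrite !mulr_ge0 ?sqr_ge0 // ltW.
  have : (g ^+ 2 * N ^+ 2 * L ^+ 2) ^+ 2 <= (a / 30) ^+ 2 by rewrite ler_pXn2r // ?nnegrE //; lra.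
  have : (a / 30) ^+ 2 <= a / 500.
    have -> : (a / 30) ^+ 2 = a * (a / 900) by field.
    have -> : a / 500 = a * (1 / 500) by ring.
    by apply: ler_wpM2l; [exact: ltW| lra].
  lra.
have ar : 0 <= a * r ^+ 2 by rewrite mulr_ge0 ?sqr_ge0 // ltW.
have -> : (1 - g * N * mu / 2) * r ^+ 2 = r ^+ 2 - a / 2 * r ^+ 2 by rewrite /a; ring.
have ee : a / 30 * r ^+ 2 = (a * r ^+ 2) / 30 by ring.
have ee2 : a / 2 * r ^+ 2 = (a * r ^+ 2) / 2 by ring.
have ee3 : a / 500 * r ^+ 2 = (a * r ^+ 2) / 500 by ring.
have ee4 : 2 * (g * N * mu) * r ^+ 2 = 2 * (a * r ^+ 2) by rewrite /a; ring.
rewrite ee4 in hsw.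
lra.
Qed.

Section Inner.
Variables (R : realType) (d n : nat) (Fs : 'I_n -> 'rV[R]_d -> 'rV[R]_d).
Variables (zs z : 'rV[R]_d) (g L : R).
Hypothesis Lip : forall i x y, enorm (Fs i x - Fs i y) <= L * enorm (x - y).
Hypothesis g0 : 0 <= g.
Hypothesis L0 : 0 <= L.
Hypothesis n2 : (2 <= n)%N.
Hypothesis small : 30 * g * n%:R * L <= 1.

Definition r := enorm (z - zs).
Definition t i := enorm (Fs i zs) + L * r.
Definition T := \sum_(i < n) t i.
Definition zl (l : seq 'I_n) := foldl (fun u i => ieg_step g (2 * g) (Fs i) u) z l.

Lemma t_ge0 i : 0 <= t i.
Proof. by rewrite /t addr_ge0 ?mulr_ge0 ?enorm_ge0. Qed.

Lemma gL_small : 60 * (g * L) <= 1.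
Proof.
have : 2 <= n%:R :> R by rewrite (ler_nat R 2 n).
have : 0 <= g * L by rewrite mulr_ge0.
move=> h1 h2.
have h3 : 0 <= (g * L) * (n%:R - 2) by rewrite mulr_ge0 // subr_ge0.
have : 30 * g * n%:R * L = 30 * ((g * L) * (n%:R - 2)) + 60 * (g * L) by ring.
move=> e; have sm := small; lra.
Qed.

Lemma Fbound i p : enorm (Fs i p) <= t i + L * enorm (p - z).
Proof.
have -> : Fs i p = (Fs i p - Fs i zs) + Fs i zs by rewrite subrK.
apply: le_trans (enormD _ _) _.
have h1 := Lip i p zs.
have h2 : enorm (p - zs) <= enorm (p - z) + r.
  by have := enormD (p - z) (z - zs); rewrite addrA subrK.
rewrite /t; have := ler_wpM2l L0 h2; have L0' := L0; lra.
Qed.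

Lemma enormBZ (u v : 'rV[R]_d) (c : R) : enorm (u - c *: v) <= enorm u + `|c| * enorm v.
Proof. by apply: le_trans (enormB _ _) _; rewrite enormZ. Qed.

Lemma inner (l : seq 'I_n) :
  \sum_(i <- l) t i <= T -> (size l <= n)%N ->
  enorm (zl l - z) <= g * (1 + 2 * g * L) * (\sum_(i <- l) t i)
                      + (g * L + 2 * g ^+ 2 * L ^+ 2) * (size l)%:R * (2 * g * T)
  /\ enorm (zl l - z + g *: \sum_(i <- l) Fs i z) <= g * L * (size l)%:R * (5 * g * T).
Proof.
elim/last_ind: l => [|l x IH].
  rewrite /zl /= !big_nil subrr scaler0 addr0.
  have -> : enorm (0 : 'rV[R]_d) = 0.
    by rewrite /enorm /sqnorm /dotp big1 ?sqrtr0 // => j _; rewrite mxE mul0r.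
  by move=> _ _; split; lra.
rewrite big_rcons /= size_rcons => HT Hs.
have g0' := g0; have L0' := L0; have sm := small.
have tx0 := t_ge0 x.
have T0 : 0 <= T by rewrite sumr_ge0 // => i _; exact: t_ge0.
have Tl0 : 0 <= \sum_(i <- l) t i by rewrite sumr_ge0 // => i _; exact: t_ge0.
have txT : t x <= T.
  by rewrite /T (bigD1 x) //= lerDl sumr_ge0 // => i _; exact: t_ge0.
have HT' : \sum_(i <- l) t i <= T by apply: le_trans HT; rewrite lerDl.
have [IH1 IH2] := IH HT' (ltnW Hs).
set D := enorm (zl l - z) in IH1 *.
set TL := \sum_(i <- l) t i in IH1 HT Tl0 *.
set m := (size l)%:R in IH1 IH2 *.
have m0 : 0 <= m by rewrite /m ler0n.
have mn : m + 1 <= n%:R by rewrite /m natr1 ler_nat.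
have hgL := gL_small.
have gLn : 30 * (g * L) * n%:R <= 1 by lra.
have D0 : 0 <= D by exact: enorm_ge0.
have DB : D <= 2 * g * T.
  apply: le_trans IH1 _.
  have h1 : g * (1 + 2 * g * L) * TL <= g * (1 + 2 * g * L) * T.
    by rewrite ler_wpM2l // mulr_ge0 //; nra.
  have h2 : (g * L + 2 * g ^+ 2 * L ^+ 2) * m <= (g * L + 2 * g ^+ 2 * L ^+ 2) * n%:R.
    by rewrite ler_wpM2l //; [rewrite addr_ge0 ?mulr_ge0 // ?sqr_ge0 //|lra].
  have gL0 : 0 <= g * L by rewrite mulr_ge0.
  have gT0 : 0 <= g * T by rewrite mulr_ge0.
  have e1 : (g * L + 2 * g ^+ 2 * L ^+ 2) = g * L * (1 + 2 * (g * L)) by ring.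
  rewrite e1 in h2 *.
  have h3 : g * L * (1 + 2 * (g * L)) * n%:R <= 1 / 25.
    have -> : g * L * (1 + 2 * (g * L)) * n%:R = (g * L * n%:R) * (1 + 2 * (g * L)) by ring.
    have : g * L * n%:R <= 1/30 by lra.
    have : 0 <= g * L * n%:R by rewrite mulr_ge0.
    move=> a b; nra.
  have h4 : g * L * (1 + 2 * (g * L)) * m * (2 * g * T) <= 1/25 * (2 * g * T).
    apply: ler_wpM2r; first by lra.
    lra.
  have e2 : g * (1 + 2 * g * L) * T = g * T + 2 * (g * L) * (g * T) by ring.
  have : (g * L) * (g * T) <= 1/60 * (g * T) by apply: ler_wpM2r => //; lra.
  lra.
set u := zl l.
set zb := u - (2 * g) *: Fs x u.
have hFu : enorm (Fs x u) <= t x + L * D := Fbound x u.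
have hzb : enorm (zb - z) <= D + 2 * g * (t x + L * D).
  have -> : zb - z = (u - z) - (2 * g) *: Fs x u by rewrite /zb addrAC.
  apply: le_trans (enormBZ _ _ _) _.
  rewrite ger0_norm ?mulr_ge0 // lerD2l ler_wpM2l //; first by rewrite mulr_ge0.
have hzb5 : enorm (zb - z) <= 5 * g * T.
  apply: le_trans hzb _.
  have : L * D <= L * (2 * g * T) by rewrite ler_wpM2l.
  have : 2 * g * (t x + L * D) <= 2 * g * (T + L * (2 * g * T)).
    by rewrite ler_wpM2l ?mulr_ge0 // lerD //; rewrite ler_wpM2l.
  have : (g * L) * (g * T) <= 1/60 * (g * T) by apply: ler_wpM2r; [rewrite mulr_ge0|lra].
  move=> a b c.
  have -> : 5 * g * T = 2 * g * T + 2 * (g * T) + g * T by ring.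
  have e : 2 * g * (T + L * (2 * g * T)) = 2 * (g * T) + 4 * ((g * L) * (g * T)) by ring.
  lra.
have hFzb : enorm (Fs x zb) <= t x + L * enorm (zb - z) := Fbound x zb.
have hnew : zl (rcons l x) = u - g *: Fs x zb.
  by rewrite /zl foldl_rcons.
split.
- rewrite hnew.
  have -> : u - g *: Fs x zb - z = (u - z) - g *: Fs x zb by rewrite addrAC.
  apply: le_trans (enormBZ _ _ _) _.
  rewrite ger0_norm //.
  have s1 : g * enorm (Fs x zb) <= g * (t x + L * (D + 2 * g * (t x + L * D))).
    rewrite ler_wpM2l // (le_trans hFzb) // lerD2l ler_wpM2l //.
  have s2 : (g * L + 2 * g ^+ 2 * L ^+ 2) * D <= (g * L + 2 * g ^+ 2 * L ^+ 2) * (2 * g * T).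
    by rewrite ler_wpM2l // addr_ge0 ?mulr_ge0 ?sqr_ge0.
  apply: le_trans (lerD (lexx D) s1) _.
  have -> : D + g * (t x + L * (D + 2 * g * (t x + L * D)))
      = D + (g * L + 2 * g ^+ 2 * L ^+ 2) * D + g * (1 + 2 * g * L) * t x by ring.
  rewrite -natr1 -/m.
  lra.
- rewrite hnew big_rcons /= scalerDr.
  have -> : u - g *: Fs x zb - z + (g *: \sum_(i <- l) Fs i z + g *: Fs x z)
     = (u - z + g *: \sum_(i <- l) Fs i z) - g *: (Fs x zb - Fs x z).
    by apply/rowP => j; rewrite !mxE; ring.
  apply: le_trans (enormBZ _ _ _) _.
  rewrite ger0_norm //.
  have := Lip x zb z => hL.
  have : g * enorm (Fs x zb - Fs x z) <= g * (L * (5 * g * T)).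
    by rewrite ler_wpM2l // (le_trans hL) // ler_wpM2l.
  rewrite -natr1 -/m.
  lra.
Qed.

End Inner.

Lemma sum_sq_le (R : realType) (n : nat) (x : 'I_n -> R) :
  (\sum_(i < n) x i) ^+ 2 <= n%:R * \sum_(i < n) x i ^+ 2.
Proof.
case: n x => [|n] x; first by rewrite !big_ord0 expr0n mul0r.
set N := n.+1%:R.
have N0 : 0 < N by rewrite ltr0n.
set S := \sum_(i < n.+1) x i.
have H : 0 <= \sum_(i < n.+1) (x i - S / N) ^+ 2 by apply: sumr_ge0 => i _; exact: sqr_ge0.
have E : \sum_(i < n.+1) (x i - S / N) ^+ 2 =
         \sum_(i < n.+1) x i ^+ 2 - 2 * (S / N) * S + N * (S / N) ^+ 2.
  have -> : N * (S / N) ^+ 2 = \sum_(i < n.+1) (S / N) ^+ 2.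
    by rewrite sumr_const card_ord mulr_natl.
  have -> : 2 * (S / N) * S = \sum_(i < n.+1) 2 * (S / N) * x i by rewrite -mulr_sumr.
  rewrite -sumrB -big_split /=; apply: eq_bigr => i _; ring.
rewrite E in H.
set q := S / N in H.
set Q := \sum_(i < n.+1) x i ^+ 2 in H *.
have Sq : S = N * q by rewrite /q; field; rewrite gt_eqF.
rewrite Sq in H *.
have H2 : N * q ^+ 2 <= Q by lra.
have := ler_wpM2l (ltW N0) H2.
have -> : (N * q) ^+ 2 = N * (N * q ^+ 2) by ring.
done.
Qed.

Lemma enorm0 (R : realType) (d : nat) : enorm (0 : 'rV[R]_d) = 0.
Proof. by rewrite /enorm /sqnorm /dotp big1 ?sqrtr0 // => j _; rewrite mxE mul0r. Qed.

Lemma avgF_lip (R : realType) (d n : nat) (Fs : 'I_n -> 'rV[R]_d -> 'rV[R]_d) (L : R) x y :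
  (0 < n)%N ->
  (forall i x y, enorm (Fs i x - Fs i y) <= L * enorm (x - y)) ->
  enorm (avgF Fs x - avgF Fs y) <= L * enorm (x - y).
Proof.
move=> n0 Lip.
rewrite /avgF -scalerBr -sumrB enormZ ger0_norm ?invr_ge0 ?ler0n //.
have h : enorm (\sum_(i < n) (Fs i x - Fs i y)) <= n%:R * (L * enorm (x - y)).
  apply: le_trans (enorm_sum _ _) _.
  have -> : n%:R * (L * enorm (x - y)) = \sum_(i < n) (L * enorm (x - y)).
    by rewrite sumr_const card_ord mulr_natl.
  by apply: ler_sum => i _; exact: Lip.
have n0' : 0 < n%:R :> R by rewrite ltr0n.
by rewrite ler_pdivrMl.
Qed.

Lemma epoch (R : realType) (d n : nat) (Fs : 'I_n -> 'rV[R]_d -> 'rV[R]_d)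
  (zs z : 'rV[R]_d) (g L mu : R) :
  (forall i x y, enorm (Fs i x - Fs i y) <= L * enorm (x - y)) ->
  strongly_monotone mu (avgF Fs) -> avgF Fs zs = 0 ->
  0 < g -> 0 < mu -> mu <= L -> (2 <= n)%N -> 30 * g * n%:R * L ^+ 2 <= mu ->
  sqnorm (ieg_epoch g (2 * g) Fs z - zs) <=
  (1 - g * n%:R * mu / 2) * sqnorm (z - zs)
  + 56 * (g ^+ 3 * n%:R ^+ 3 * L ^+ 2 * sigma2 Fs zs / mu).
Proof.
move=> Lip SM Fz g0 mu0 muL n2 hs.
have L0 : 0 < L by apply: lt_le_trans muL.
set N := n%:R.
have N2 : 2 <= N by rewrite /N (ler_nat R 2 n).
have N0 : 0 < N by lra.
have small : 30 * g * N * L <= 1.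
  have e : 30 * g * N * L * L = 30 * g * N * L ^+ 2 by ring.
  have : 30 * g * N * L * L <= 1 * L by lra.
  by rewrite ler_pM2r.
have HI := @inner R d n Fs zs z g L Lip (ltW g0) (ltW L0) n2 small (enum 'I_n).
have [_ HE] := HI (ltac:(by rewrite big_enum)) (ltac:(by rewrite size_enum_ord)).
rewrite size_enum_ord -/N in HE.
have hz : ieg_epoch g (2 * g) Fs z = zl Fs z g (enum 'I_n) by [].
rewrite -hz in HE.
set A := avgF Fs z.
have sumF : \sum_(i <- enum 'I_n) Fs i z = N *: A.
  by rewrite big_enum /A /avgF scalerA mulfV ?scale1r // gt_eqF.
rewrite sumF in HE.
set S := \sum_(i < n) enorm (Fs i zs).
have S0 : 0 <= S by apply: sumr_ge0 => i _; exact: enorm_ge0.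
set rr := enorm (z - zs).
have r0 : 0 <= rr by exact: enorm_ge0.
have eT : T Fs zs z L = S + N * L * rr.
  rewrite /T /t big_split /= sumr_const card_ord mulr_natl /r -/rr -/S -/N; ring.
rewrite eT in HE.
set ez := ieg_epoch g (2 * g) Fs z in HE *.
set E := ez - z + g *: (N *: A) in HE.
set w := z - zs - (g * N) *: A.
have dec : ez - zs = w + E by apply/rowP => j; rewrite /w /E !mxE; ring.
rewrite dec sqnormD.
have hA : enorm A <= L * rr.
  have := avgF_lip z zs (leq_trans (isT : (0 < 2)%N) n2) Lip.
  by rewrite Fz subr0.
have hsm : mu * sqnorm (z - zs) <= dotp (z - zs) A.
  by have := SM z zs; rewrite Fz subr0 dotpC.
have sqA : sqnorm A <= L ^+ 2 * rr ^+ 2.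
  rewrite -enorm_sq -exprMn ler_pXn2r // ?nnegrE ?enorm_ge0 //.
  by rewrite mulr_ge0 // ltW.
have r2 : sqnorm (z - zs) = rr ^+ 2 by rewrite -enorm_sq.
have hsw : sqnorm w <= rr ^+ 2 - 2 * (g * N * mu) * rr ^+ 2 + g ^+ 2 * N ^+ 2 * L ^+ 2 * rr ^+ 2.
  rewrite /w sqnormB sqnormZ dotpZr r2.
  rewrite r2 in hsm.
  have h1 : (g * N) * (mu * rr ^+ 2) <= (g * N) * dotp (z - zs) A.
    by apply: ler_wpM2l => //; rewrite mulr_ge0 // ltW.
  have h2 : (g * N) ^+ 2 * sqnorm A <= (g * N) ^+ 2 * (L ^+ 2 * rr ^+ 2).
    by apply: ler_wpM2l => //; exact: sqr_ge0.
  have e1 : (g * N) ^+ 2 * (L ^+ 2 * rr ^+ 2) = g ^+ 2 * N ^+ 2 * L ^+ 2 * rr ^+ 2 by ring.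
  lra.
have hw : enorm w <= rr.
  rewrite -(ler_pXn2r (_ : 0 < 2)%N) ?nnegrE ?enorm_ge0 // enorm_sq.
  apply: le_trans hsw _.
  have y : g * N * L ^+ 2 <= mu / 30 by lra.
  have f1 : g ^+ 2 * N ^+ 2 * L ^+ 2 <= (g * N) * (mu / 30).
    have -> : g ^+ 2 * N ^+ 2 * L ^+ 2 = (g * N) * (g * N * L ^+ 2) by ring.
    by apply: ler_wpM2l => //; rewrite mulr_ge0 // ltW.
  have f1r : g ^+ 2 * N ^+ 2 * L ^+ 2 * rr ^+ 2 <= (g * N) * (mu / 30) * rr ^+ 2.
    by apply: ler_wpM2r => //; exact: sqr_ge0.
  have : 0 <= g * N * mu * rr ^+ 2 by rewrite !mulr_ge0 ?sqr_ge0 // ltW.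
  lra.
have hE0 : 0 <= enorm E := enorm_ge0 _.
have hE : enorm E <= 5 * g ^+ 2 * N * L * (S + N * L * rr).
  apply: le_trans HE _; rewrite le_eqVlt; apply/orP; left; apply/eqP; ring.
have cross : 2 * dotp w E <= 2 * rr * enorm E.
  have := CS w E.
  have : enorm w * enorm E <= rr * enorm E by apply: ler_wpM2r.
  lra.
have sqE : sqnorm E = enorm E ^+ 2 by rewrite enorm_sq.
have fa := @final_arith R g N L mu rr S (sqnorm w) (enorm E) g0 N2 mu0 muL hs r0 S0 hsw hE0 hE.
have hS : S ^+ 2 <= N ^+ 2 * sigma2 Fs zs.
  have := sum_sq_le (fun i => enorm (Fs i zs)).
  rewrite -/S -/N /sigma2.
  have -> : \sum_(i < n) enorm (Fs i zs) ^+ 2 = \sum_(i < n) sqnorm (Fs i zs).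
    by apply: eq_bigr => i _; rewrite enorm_sq.
  have -> : N ^+ 2 * (N^-1 * \sum_(i < n) sqnorm (Fs i zs)) = N * \sum_(i < n) sqnorm (Fs i zs).
    by field; rewrite gt_eqF.
  done.
have hP : g ^+ 3 * N * L ^+ 2 * S ^+ 2 / mu <= g ^+ 3 * N ^+ 3 * L ^+ 2 * sigma2 Fs zs / mu.
  rewrite ler_pM2r ?invr_gt0 //.
  have -> : g ^+ 3 * N ^+ 3 * L ^+ 2 * sigma2 Fs zs = (g ^+ 3 * N * L ^+ 2) * (N ^+ 2 * sigma2 Fs zs) by ring.
  apply: ler_wpM2l => //; rewrite !mulr_ge0 ?exprn_ge0 // ?ltW //.
rewrite r2.
lra.
Qed.

Lemma conv (R : realType) (d n : nat) (Fs : 'I_n -> 'rV[R]_d -> 'rV[R]_d)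
  (zs z0 : 'rV[R]_d) (g L mu : R) :
  (forall i x y, enorm (Fs i x - Fs i y) <= L * enorm (x - y)) ->
  strongly_monotone mu (avgF Fs) -> avgF Fs zs = 0 ->
  0 < g -> 0 < mu -> mu <= L -> (2 <= n)%N -> 30 * g * n%:R * L ^+ 2 <= mu ->
  forall k, sqnorm (ieg g (2 * g) Fs z0 k - zs) <=
  (1 - g * n%:R * mu / 2) ^+ k * sqnorm (z0 - zs)
  + 112 * g ^+ 2 * n%:R ^+ 2 * L ^+ 2 * sigma2 Fs zs / mu ^+ 2.
Proof.
move=> Lip SM Fz g0 mu0 muL n2 hs.
have L0 : 0 < L by apply: lt_le_trans muL.
set N := n%:R.
have N2 : 2 <= N by rewrite /N (ler_nat R 2 n).
set q := g * N * mu / 2.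
have q0 : 0 <= q by rewrite /q !mulr_ge0 // ltW.
have q1 : q <= 1.
  have h1 : (g * N * mu) * L ^+ 2 <= mu * (mu / 30).
    have -> : (g * N * mu) * L ^+ 2 = mu * (g * N * L ^+ 2) by ring.
    by apply: ler_wpM2l; [exact: ltW | lra].
  have h2 : mu * mu <= L ^+ 2 by rewrite expr2; apply: ler_pM => //; exact: ltW.
  have L20 : 0 < L ^+ 2 by rewrite exprn_gt0.
  have : (g * N * mu) * L ^+ 2 <= 2 * L ^+ 2 by lra.
  rewrite ler_pM2r // => h; rewrite /q; lra.
have sig0 : 0 <= sigma2 Fs zs.
  by rewrite /sigma2 mulr_ge0 ?invr_ge0 ?ler0n // sumr_ge0 // => i _; exact: sqnorm_ge0.
set Nz := 112 * g ^+ 2 * N ^+ 2 * L ^+ 2 * sigma2 Fs zs / mu ^+ 2.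
have eNz : 56 * (g ^+ 3 * N ^+ 3 * L ^+ 2 * sigma2 Fs zs / mu) = q * Nz.
  by rewrite /q /Nz; field; rewrite gt_eqF.
elim=> [|k IH].
  rewrite expr0 mul1r /ieg /= lerDl /Nz.
  apply: divr_ge0; last by rewrite sqr_ge0.
  have g2 := sqr_ge0 g. have L2 := sqr_ge0 L. have N20 := sqr_ge0 N.
  by rewrite mulr_ge0 // mulr_ge0 // mulr_ge0 // mulr_ge0.
have hk : ieg g (2 * g) Fs z0 k.+1 = ieg_epoch g (2 * g) Fs (ieg g (2 * g) Fs z0 k).
  by rewrite /ieg iterS.
rewrite hk.
have := epoch (ieg g (2 * g) Fs z0 k) Lip SM Fz g0 mu0 muL n2 hs.
rewrite -/N eNz -/q => h; apply: le_trans h _.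
have h1 : (1 - q) * sqnorm (ieg g (2 * g) Fs z0 k - zs) <=
          (1 - q) * ((1 - q) ^+ k * sqnorm (z0 - zs) + Nz).
  by apply: ler_wpM2l => //; lra.
rewrite exprS.
lra.
Qed.

Lemma pow_exp (R : realType) (x : R) (K : nat) : 0 <= x -> x <= 1 ->
  (1 - x) ^+ K <= expR (- (x * K%:R)).
Proof.
move=> x0 x1.
rewrite -mulNr expRM_natr.
apply: lerXn2r; rewrite ?nnegrE ?expR_ge0 //; first lra.
have := expR_ge1Dx (- x); lra.
Qed.

Lemma a_small (R : realType) (g N L mu : R) :
  0 < g -> 0 <= N -> 0 < mu -> mu <= L -> 30 * g * N * L ^+ 2 <= mu -> g * N * mu <= 1 / 30.
Proof.
move=> g0 N0 mu0 muL hs.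
have L0 : 0 < L by apply: lt_le_trans muL.
have h1 : (g * N * mu) * L ^+ 2 <= mu * (mu / 30).
  have -> : (g * N * mu) * L ^+ 2 = mu * (g * N * L ^+ 2) by ring.
  by apply: ler_wpM2l; [exact: ltW | lra].
have h2 : mu * mu <= L ^+ 2 by rewrite expr2; apply: ler_pM => //; exact: ltW.
have L20 : 0 < L ^+ 2 by rewrite exprn_gt0.
have : (g * N * mu) * L ^+ 2 <= 1 / 30 * L ^+ 2 by lra.
by rewrite ler_pM2r.
Qed.

Lemma lam_pos (R : realType) (N : R) (K : nat) : 2 <= N -> (1 <= K)%N ->
  0 < ln (Num.sqrt N * K%:R).
Proof.
move=> N2 K1; apply: ln_gt0.
have s1 : 1 < Num.sqrt N by rewrite -sqrtr1 ltr_sqrt //; lra.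
have k1 : 1 <= K%:R :> R by rewrite ler1n.
have : Num.sqrt N * 1 <= Num.sqrt N * K%:R by rewrite ler_wpM2l // ltW // (lt_trans _ s1).
lra.
Qed.

Lemma lam_split (R : realType) (N : R) (K : nat) : 2 <= N -> (1 <= K)%N ->
  ln (Num.sqrt N * K%:R) = ln (Num.sqrt N) + ln K%:R.
Proof.
move=> N2 K1; rewrite lnM // posrE ?sqrtr_gt0 ?ltr0n //; lra.
Qed.

Lemma p2 (R : realType) (N L mu r0 sig a0 X : R) (K : nat) :
  2 <= N -> 0 < mu -> mu <= L -> 0 <= r0 -> 0 <= sig -> 0 < a0 ->
  30 * a0 * N * L ^+ 2 <= mu -> (1 <= K)%N ->
  let g := Num.min a0 (4 * ln (Num.sqrt N * K%:R) / (mu * N * K%:R)) in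
  X <= (1 - g * N * mu / 2) ^+ K * r0 + 112 * g ^+ 2 * N ^+ 2 * L ^+ 2 * sig / mu ^+ 2 ->
  X <= (r0 + (1792 * L ^+ 2 * sig / mu ^+ 4
             + 16 * (r0 + 112 * a0 ^+ 2 * N ^+ 2 * L ^+ 2 * sig / mu ^+ 2) / (a0 * mu * N) ^+ 2)
             * (1 + ln (Num.sqrt N)) ^+ 2)
       * (1 + ln K%:R) ^+ 2 * (K%:R ^+ 2)^-1.
Proof.
move=> N2 mu0 muL r00 sig0 a00 hs K1 g hX.
have L0 : 0 < L by apply: lt_le_trans muL.
have N0 : 0 < N by lra.
have K0 : 0 < K%:R :> R by rewrite ltr0n.
have Kge1 : 1 <= K%:R :> R by rewrite ler1n.
set lam := ln (Num.sqrt N * K%:R).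
have lam0 : 0 < lam := lam_pos N2 K1.
set ell := ln (Num.sqrt N).
have ell0 : 0 <= ell.
  rewrite /ell ln_ge0 // -sqrtr1 ler_sqrt; lra.
set lK := ln K%:R.
have lK0 : 0 <= lK by rewrite /lK ln_ge0.
have elam : lam = ell + lK by rewrite /lam lam_split.
set b := 4 * lam / (mu * N * K%:R).
have b0 : 0 < b by rewrite /b divr_gt0 ?mulr_gt0.
set W := r0 + 112 * a0 ^+ 2 * N ^+ 2 * L ^+ 2 * sig / mu ^+ 2.
set c1 := 1792 * L ^+ 2 * sig / mu ^+ 4.
set c2 := 16 * W / (a0 * mu * N) ^+ 2.
have W0 : 0 <= W.
  have h112 : 0 <= 112 :> R by lra.
  have := mulr_ge0 (mulr_ge0 (mulr_ge0 (mulr_ge0 h112 (sqr_ge0 a0)) (sqr_ge0 N)) (sqr_ge0 L)) sig0.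
  move=> h; rewrite /W addr_ge0 // divr_ge0 // sqr_ge0 //.
have c10 : 0 <= c1.
  have h1792 : 0 <= 1792 :> R by lra.
  have := mulr_ge0 (mulr_ge0 h1792 (sqr_ge0 L)) sig0.
  move=> h; rewrite /c1 divr_ge0 // exprn_ge0 // ltW //.
have c20 : 0 <= c2 by rewrite /c2 divr_ge0 ?sqr_ge0 // mulr_ge0.
set iK := (K%:R ^+ 2)^-1 : R.
have iK0 : 0 < iK by rewrite /iK invr_gt0 exprn_gt0.
have lam2 : 0 <= lam ^+ 2 by exact: sqr_ge0.
have claim : X <= (r0 + (c1 + c2) * lam ^+ 2) * iK.
  have [hab|hab] := lerP a0 b.
  -
    have hg : g = a0 by rewrite /g /= -/lam -/b min_l.
    rewrite hg in hX.
    have q1 : a0 * N * mu / 2 <= 1.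
      have := a_small a00 (ltW N0) mu0 muL hs; lra.
    have q0 : 0 <= a0 * N * mu / 2 by have := mulr_gt0 (mulr_gt0 a00 N0) mu0; lra.
    have hp : (1 - a0 * N * mu / 2) ^+ K <= 1 by apply: exprn_ile1; lra.
    have hX2 : X <= W.
      apply: le_trans hX _; rewrite /W lerD2r.
      by have := ler_wpM2r r00 hp; rewrite mul1r.
    have h1 : a0 * mu * N * K%:R <= 4 * lam.
      move: hab; rewrite /b ler_pdivlMr ?mulr_gt0 // => h.
      have -> : a0 * mu * N * K%:R = a0 * (mu * N * K%:R) by ring.
      done.
    have h2 : (a0 * mu * N * K%:R) ^+ 2 <= 16 * lam ^+ 2.
      have -> : 16 * lam ^+ 2 = (4 * lam) ^+ 2 by ring.
      by rewrite lerXn2r // nnegrE !mulr_ge0 // ?ltW.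
    have h3 : W <= c2 * lam ^+ 2 * iK.
      have -> : c2 * lam ^+ 2 * iK = W * (16 * lam ^+ 2 / (a0 * mu * N * K%:R) ^+ 2).
        rewrite /c2 /iK; field.
        by rewrite !gt_eqF.
      have hpos : 0 < (a0 * mu * N * K%:R) ^+ 2 by rewrite exprn_gt0 // !mulr_gt0.
      have : 1 <= 16 * lam ^+ 2 / (a0 * mu * N * K%:R) ^+ 2 by rewrite ler_pdivlMr // mul1r.
      move=> h; have := ler_wpM2l W0 h; rewrite mulr1 //.
    have : 0 <= (r0 + c1 * lam ^+ 2) * iK by apply: mulr_ge0; [rewrite addr_ge0 // mulr_ge0 | exact: ltW].
    have e : (r0 + (c1 + c2) * lam ^+ 2) * iK = (r0 + c1 * lam ^+ 2) * iK + c2 * lam ^+ 2 * iK by ring.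
    lra.
  -
    have hg : g = b by rewrite /g /= -/lam -/b min_r // ltW.
    rewrite hg in hX.
    have hsb : 30 * b * N * L ^+ 2 <= mu.
      have e : 30 * a0 * N * L ^+ 2 - 30 * b * N * L ^+ 2 = (a0 - b) * (30 * N * L ^+ 2) by ring.
      have : 0 <= (a0 - b) * (30 * N * L ^+ 2).
        by apply: mulr_ge0; [rewrite subr_ge0 ltW | rewrite mulr_ge0 ?sqr_ge0 //; lra].
      lra.
    have q1 : b * N * mu / 2 <= 1.
      have := a_small b0 (ltW N0) mu0 muL hsb; lra.
    have q0 : 0 <= b * N * mu / 2 by have := mulr_gt0 (mulr_gt0 b0 N0) mu0; lra.
    have hp := pow_exp K q0 q1.
    have ex : b * N * mu / 2 * K%:R = lam * 2%:R.
      by rewrite /b; field; rewrite !gt_eqF.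
    rewrite ex in hp.
    have eexp : expR (- (lam * 2%:R)) = (N * K%:R ^+ 2)^-1.
      rewrite expRN expRM_natr /lam lnK ?posrE ?mulr_gt0 ?sqrtr_gt0 //.
      by rewrite exprMn sqr_sqrtr // ltW.
    rewrite eexp in hp.
    have hiK : (N * K%:R ^+ 2)^-1 <= iK.
      rewrite /iK lef_pV2 ?posrE ?mulr_gt0 ?exprn_gt0 //.
      by rewrite ler_peMl ?exprn_ge0 ?ltW //; lra.
    have t1 : (1 - b * N * mu / 2) ^+ K * r0 <= r0 * iK.
      rewrite mulrC; apply: ler_wpM2l => //; exact: le_trans hp hiK.
    have t2 : 112 * b ^+ 2 * N ^+ 2 * L ^+ 2 * sig / mu ^+ 2 = c1 * lam ^+ 2 * iK.
      rewrite /b /c1 /iK; field.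
      by rewrite !gt_eqF.
    have : 0 <= c2 * lam ^+ 2 * iK by apply: mulr_ge0; [exact: mulr_ge0 | exact: ltW].
    have e : (r0 + (c1 + c2) * lam ^+ 2) * iK = r0 * iK + c1 * lam ^+ 2 * iK + c2 * lam ^+ 2 * iK by ring.
    lra.
have hlam : lam <= (1 + ell) * (1 + lK).
  rewrite elam; have := mulr_ge0 ell0 lK0; lra.
have hlam2 : lam ^+ 2 <= (1 + ell) ^+ 2 * (1 + lK) ^+ 2.
  rewrite -exprMn; apply: lerXn2r => //; rewrite nnegrE; [exact: ltW | apply: mulr_ge0; lra].
have h1K : 1 <= (1 + lK) ^+ 2 by rewrite exprn_ege1 //; lra.
apply: le_trans claim _.
apply: ler_wpM2r; first exact: ltW.
have : (c1 + c2) * lam ^+ 2 <= (c1 + c2) * ((1 + ell) ^+ 2 * (1 + lK) ^+ 2).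
  by apply: ler_wpM2l => //; rewrite addr_ge0.
have : r0 * 1 <= r0 * (1 + lK) ^+ 2 by apply: ler_wpM2l.
have e : (r0 + (c1 + c2) * (1 + ell) ^+ 2) * (1 + lK) ^+ 2
   = r0 * (1 + lK) ^+ 2 + (c1 + c2) * ((1 + ell) ^+ 2 * (1 + lK) ^+ 2) by ring.
lra.
Qed.

Lemma p2C_ge0 (R : realType) (N L mu r0 sig a0 : R) :
  2 <= N -> 0 < mu -> 0 <= r0 -> 0 <= sig -> 0 < a0 ->
  0 <= (r0 + (1792 * L ^+ 2 * sig / mu ^+ 4
             + 16 * (r0 + 112 * a0 ^+ 2 * N ^+ 2 * L ^+ 2 * sig / mu ^+ 2) / (a0 * mu * N) ^+ 2)
             * (1 + ln (Num.sqrt N)) ^+ 2).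
Proof.
move=> N2 mu0 r00 sig0 a00.
set W := r0 + 112 * a0 ^+ 2 * N ^+ 2 * L ^+ 2 * sig / mu ^+ 2.
have W0 : 0 <= W.
  have h112 : 0 <= 112 :> R by lra.
  have := mulr_ge0 (mulr_ge0 (mulr_ge0 (mulr_ge0 h112 (sqr_ge0 a0)) (sqr_ge0 N)) (sqr_ge0 L)) sig0.
  move=> h; rewrite /W addr_ge0 // divr_ge0 // sqr_ge0 //.
set c1 := 1792 * L ^+ 2 * sig / mu ^+ 4.
have c10 : 0 <= c1.
  have h1792 : 0 <= 1792 :> R by lra.
  have := mulr_ge0 (mulr_ge0 h1792 (sqr_ge0 L)) sig0.
  move=> h; rewrite /c1 divr_ge0 // exprn_ge0 // ltW //.
set c2 := 16 * W / (a0 * mu * N) ^+ 2.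
have c20 : 0 <= c2 by rewrite /c2 divr_ge0 ?sqr_ge0 // mulr_ge0.
have hc : 0 <= c1 + c2 := addr_ge0 c10 c20.
exact: addr_ge0 r00 (mulr_ge0 hc (sqr_ge0 _)).
Qed.

Unset Implicit Arguments.

Theorem corollary2 (R : realType) (d n : nat) (Fs : 'I_n -> 'rV[R]_d -> 'rV[R]_d)
  (L : 'I_n -> R) (mu : R) (zs z0 : 'rV[R]_d) :
  (2 <= n)%N ->
  0 < mu ->
  strongly_monotone mu (avgF Fs) ->
  (forall i, 0 <= L i) ->
  (forall i, lipschitzE (L i) (Fs i)) ->
  avgF Fs zs = 0 ->
  (* part 1 *)
  (forall g1 : R, 0 < g1 ->
     g1 <= mu / (10 * Lmax L ^+ 2 * Num.sqrt (10 * n%:R ^+ 2 + n%:R + 29)) ->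
     forall k : nat,
       sqnorm (ieg g1 (2 * g1) Fs z0 k - zs)
       <= (1 - g1 * n%:R * mu / 4) ^+ k * sqnorm (z0 - zs)
          + 48 * Lmax L ^+ 2 / mu ^+ 2
            * (6 * n%:R * (n%:R - 1) * g1 ^+ 2 + (2 * g1) ^+ 2) * sigma2 Fs zs)
  /\
  (* part 2: O~ as K -> oo, hiding a constant C and a polylog(K) factor *)
  (exists (C : R) (p : nat), forall K : nat, (1 <= K)%N ->
     let g1 := Num.min
                 (mu / (10 * Lmax L ^+ 2 * Num.sqrt (10 * n%:R ^+ 2 + 2 * n%:R + 29)))
                 (4 * ln (Num.sqrt n%:R * K%:R) / (mu * n%:R * K%:R)) in
     sqnorm (ieg g1 (2 * g1) Fs z0 K - zs)
     <= C * (1 + ln K%:R) ^+ p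
          * (expR (- (K%:R * mu ^+ 2 / Lmax L ^+ 2)) + (K%:R ^+ 2)^-1)).
Proof.
move=> n2 mu0 SM L0 Lip Fz.
set Lm := Lmax L.
have Lm0 : 0 <= Lm by exact: bigmax_ge_id.
have LiLm : forall i, L i <= Lm by move=> i; exact: le_bigmax.
have Lip' : forall i x y, enorm (Fs i x - Fs i y) <= Lm * enorm (x - y).
  move=> i x y; apply: le_trans (Lip i x y) _.
  by apply: ler_wpM2r; [exact: enorm_ge0 | exact: LiLm].
have n0 : (0 < n)%N by apply: leq_trans n2.
have [[v hv]|hall] := pselect (exists v : 'rV[R]_d, sqnorm v != 0); last first.
  have H0 : forall v : 'rV[R]_d, sqnorm v = 0.
    by move=> v; apply/eqP; apply/negPn/negP => h; apply: hall; exists v.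
  have s0 : sigma2 Fs zs = 0 by rewrite /sigma2 big1 ?mulr0 // => i _; exact: H0.
  split.
    move=> g1 _ _ k; rewrite !H0 s0 !mulr0 addr0; exact: lexx.
  by exists 0, 0%N => K _ /=; rewrite H0 !mul0r.
have muL : mu <= Lm.
  have sv : 0 < sqnorm v by rewrite lt_def hv sqnorm_ge0.
  have h1 := SM (zs + v) zs.
  have e : zs + v - zs = v by rewrite addrC addKr.
  rewrite e in h1.
  have h2 := CS (avgF Fs (zs + v) - avgF Fs zs) v.
  have h3 := avgF_lip (zs + v) zs n0 Lip'.
  rewrite e in h3.
  have h4 : enorm (avgF Fs (zs + v) - avgF Fs zs) * enorm v <= Lm * enorm v * enorm v.
    by apply: ler_wpM2r => //; exact: enorm_ge0.
  have e2 : Lm * enorm v * enorm v = Lm * sqnorm v by rewrite -enorm_sq expr2 mulrA.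
  have : mu * sqnorm v <= Lm * sqnorm v by lra.
  by rewrite ler_pM2r.
have Lmp : 0 < Lm by apply: lt_le_trans muL.
set N := n%:R.
have N2 : 2 <= N by rewrite /N (ler_nat R 2 n).
have sig0 : 0 <= sigma2 Fs zs.
  by rewrite /sigma2 mulr_ge0 ?invr_ge0 ?ler0n // sumr_ge0 // => i _; exact: sqnorm_ge0.
have sq3 : forall c, 0 <= c -> 3 * N <= Num.sqrt (10 * N ^+ 2 + c * N + 29).
  move=> c c0.
  have hc : 0 <= c * N by rewrite mulr_ge0 //; lra.
  rewrite -(ler_pXn2r (_ : 0 < 2)%N) ?nnegrE ?sqrtr_ge0 //; last lra.
  rewrite sqr_sqrtr; last by have := sqr_ge0 N; lra.
  have := sqr_ge0 N; rewrite exprMn; lra.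
have g_ok : forall c g, 0 <= c -> 0 < g ->
    g <= mu / (10 * Lm ^+ 2 * Num.sqrt (10 * N ^+ 2 + c * N + 29)) ->
    30 * g * N * Lm ^+ 2 <= mu.
  move=> c g c0 g0 hg.
  have s3 := sq3 c c0.
  have sp : 0 < 10 * Lm ^+ 2 * Num.sqrt (10 * N ^+ 2 + c * N + 29).
    rewrite mulr_gt0 ?mulr_gt0 ?exprn_gt0 //; apply: lt_le_trans s3; lra.
  rewrite ler_pdivlMr // in hg.
  apply: le_trans hg.
  have -> : 30 * g * N * Lm ^+ 2 = (10 * g * Lm ^+ 2) * (3 * N) by ring.
  have -> : g * (10 * Lm ^+ 2 * Num.sqrt (10 * N ^+ 2 + c * N + 29))
     = (10 * g * Lm ^+ 2) * Num.sqrt (10 * N ^+ 2 + c * N + 29) by ring.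
  apply: ler_wpM2l => //.
  have g0w := ltW g0; have h10 : 0 <= 10 :> R by lra.
  exact: mulr_ge0 (mulr_ge0 h10 g0w) (sqr_ge0 _).
split.
- move=> g1 g10 hg1 k.
  have hg1' : g1 <= mu / (10 * Lm ^+ 2 * Num.sqrt (10 * N ^+ 2 + 1 * N + 29)) by rewrite mul1r.
  have hs := g_ok 1 g1 ler01 g10 hg1'.
  have := conv z0 Lip' SM Fz g10 mu0 muL n2 hs k.
  rewrite -/N => h; apply: le_trans h _.
  have N0 : 0 <= N by lra.
  have a1 := a_small g10 N0 mu0 muL hs.
  have q0 : 0 <= g1 * N * mu by rewrite !mulr_ge0 // ?ltW //; lra.
  apply: lerD.
    apply: ler_wpM2r; first exact: sqnorm_ge0.
    apply: lerXn2r; rewrite ?nnegrE; lra.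
  set X := g1 ^+ 2 * Lm ^+ 2 * sigma2 Fs zs / mu ^+ 2.
  have X0 : 0 <= X.
    rewrite /X divr_ge0 ?sqr_ge0 //.
    by apply: mulr_ge0 => //; apply: mulr_ge0; exact: sqr_ge0.
  have e1 : 112 * g1 ^+ 2 * N ^+ 2 * Lm ^+ 2 * sigma2 Fs zs / mu ^+ 2 = (112 * N ^+ 2) * X.
    by rewrite /X; field; rewrite gt_eqF.
  have e2 : 48 * Lm ^+ 2 / mu ^+ 2 * (6 * N * (N - 1) * g1 ^+ 2 + (2 * g1) ^+ 2) * sigma2 Fs zs
      = (48 * (6 * N * (N - 1) + 4)) * X.
    by rewrite /X; field; rewrite gt_eqF.
  rewrite e1 e2; apply: ler_wpM2r => //.
  have : 2 * N <= N ^+ 2 by rewrite expr2 ler_wpM2r //; lra.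
  lra.
- set a0 := mu / (10 * Lm ^+ 2 * Num.sqrt (10 * N ^+ 2 + 2 * N + 29)).
  have c2 : 0 <= 2 :> R by lra.
  have sp : 0 < 10 * Lm ^+ 2 * Num.sqrt (10 * N ^+ 2 + 2 * N + 29).
    have s3 := sq3 2 c2.
    rewrite mulr_gt0 ?mulr_gt0 ?exprn_gt0 //; apply: lt_le_trans s3; lra.
  have a00 : 0 < a0 by rewrite /a0 divr_gt0.
  have hsa : 30 * a0 * N * Lm ^+ 2 <= mu := g_ok 2 a0 c2 a00 (lexx _).
  have Cge0 := p2C_ge0 Lm N2 mu0 (sqnorm_ge0 (z0 - zs)) sig0 a00.
  move: Cge0; set C := (X in 0 <= X) => Cge0.
  exists C, 2%N => K K1 /=.
  set g1 := Num.min _ _.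
  have hgle : g1 <= a0 by rewrite /g1 ge_min lexx.
  have hgpos : 0 < g1.
    rewrite /g1 lt_min a00 /=.
    have l0 := lam_pos N2 K1.
    have K0 : 0 < K%:R :> R by rewrite ltr0n.
    have h4 : 0 < 4 :> R by lra.
    have N0' : 0 < N by lra.
    by apply: divr_gt0; [exact: mulr_gt0 | rewrite !mulr_gt0].
  have hs : 30 * g1 * N * Lm ^+ 2 <= mu.
    apply: le_trans hsa.
    have e : 30 * a0 * N * Lm ^+ 2 - 30 * g1 * N * Lm ^+ 2 = (a0 - g1) * (30 * N * Lm ^+ 2) by ring.
    have : 0 <= (a0 - g1) * (30 * N * Lm ^+ 2).
      by apply: mulr_ge0; [rewrite subr_ge0 | rewrite mulr_ge0 ?sqr_ge0 //; lra].
    lra.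
  have hc := conv z0 Lip' SM Fz hgpos mu0 muL n2 hs K.
  have := p2 N2 mu0 muL (sqnorm_ge0 (z0 - zs)) sig0 a00 hsa K1 hc.
  move=> h.
  have hA : 0 <= (1 + ln (K%:R : R)) ^+ 2 := sqr_ge0 _.
  have hE : 0 <= expR (- (K%:R * mu ^+ 2 / Lm ^+ 2)) := expR_ge0 _.
  have key : C * (1 + ln (K%:R : R)) ^+ 2 * (K%:R ^+ 2)^-1 <=
     C * (1 + ln (K%:R : R)) ^+ 2 * (expR (- (K%:R * mu ^+ 2 / Lm ^+ 2)) + (K%:R ^+ 2)^-1).
    rewrite [X in _ <= X]mulrDr lerDr.
    by apply: mulr_ge0 => //; exact: mulr_ge0.
  exact: le_trans h key.
Qed.
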